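(* Let $\alpha,\beta,\mu$ be real parameters with $0<\alpha\leq 1$, $\beta>0$, $0<\mu\leq 1$ and $\beta\neq\mu$. Define $W_0:\mathbb{R}^2_+\to\mathbb{R}^2_+$ by $$W_0(x,y)=\left(\beta y-\frac{\alpha x}{1+x}+x,\ \frac{\alpha x}{1+x}-\mu y+y\right).$$ Then for every integer $p\geq 2$, $W_0$ has no point of prime period $p$ in $\mathbb{R}^2_+$; i.e., every $z\in\mathbb{R}^2_+$ with $W_0^p(z)=z$ for some $p\geq 1$ is a fixed point of $W_0$.
   Context: $\mathbb{R}^2_+=\{(x,y)\in\mathbb{R}^2: x\geq 0,\ y\geq 0\}$; under the stated conditions $W_0$ maps $\mathbb{R}^2_+$ into itself. $W_0^p$ denotes the $p$-th iterate. A point $z$ is periodic if $W_0^p(z)=z$ for some $p\geq1$; the smallest such $p$ is its prime (least) period. *)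

(* Defs.v *)
From Stdlib Require Import Reals.
Open Scope R_scope.

Definition W0 (alpha beta mu : R) (z : R * R) : R * R :=
  let (x, y) := z in
  (beta * y - alpha * x / (1 + x) + x, alpha * x / (1 + x) - mu * y + y).

Definition W0_iter (alpha beta mu : R) (p : nat) (z : R * R) : R * R :=
  Nat.iter p (W0 alpha beta mu) z.

Definition in_R2plus (z : R * R) : Prop := 0 <= fst z /\ 0 <= snd z.

Definition has_prime_period (alpha beta mu : R) (p : nat) (z : R * R) : Prop :=
  (1 <= p)%nat /\ W0_iter alpha beta mu p z = z /\
  forall k : nat, (1 <= k < p)%nat -> W0_iter alpha beta mu k z <> z.

(* Main.v *)
Require Import Defs.
From Stdlib Require Import Reals Lra Lia Psatz.
Open Scope R_scope.

Section S.
Variables alpha beta mu : R.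
Hypothesis Ha : 0 < alpha <= 1.
Hypothesis Hb : 0 < beta.
Hypothesis Hm : 0 < mu <= 1.
Hypothesis Hbm : beta <> mu.

Let W := W0 alpha beta mu.
Let Sm (z : R * R) := fst z + snd z.

Lemma W_pos z : in_R2plus z -> in_R2plus (W z).
Proof.
  destruct z as [x y]; unfold in_R2plus, W, W0; simpl; intros [Hx Hy].
  assert (H1 : 0 <= x / (1 + x)) by (unfold Rdiv; apply Rmult_le_pos; [lra | left; apply Rinv_0_lt_compat; lra]).
  assert (H2 : x / (1 + x) <= x).
  { assert (Hi : / (1 + x) <= 1).
    { rewrite <- Rinv_1 at 2. apply Rinv_le_contravar; lra. }
    assert (0 < / (1 + x)) by (apply Rinv_0_lt_compat; lra).
    unfold Rdiv; nra. }
  unfold Rdiv in *. split; nra.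
Qed.

Lemma iter_pos n z : in_R2plus z -> in_R2plus (Nat.iter n W z).
Proof. induction n; simpl; auto. intros; apply W_pos; auto. Qed.

Lemma Sm_W z : Sm (W z) = Sm z + (beta - mu) * snd z.
Proof. destruct z as [x y]; unfold Sm, W, W0; simpl; ring. Qed.

Lemma mono n z : in_R2plus z ->
  (beta - mu) * (Sm (Nat.iter (S n) W z) - Sm (Nat.iter 1 W z)) >= 0.
Proof.
  intros Hz; induction n.
  - simpl; lra.
  - change (Nat.iter (S (S n)) W z) with (W (Nat.iter (S n) W z)).
    rewrite Sm_W.
    pose proof (iter_pos (S n) z Hz) as [_ Hy].
    assert (0 <= (beta - mu) * (beta - mu) * snd (Nat.iter (S n) W z)).
    { apply Rmult_le_pos; [nra | exact Hy]. }
    set (a := Sm (Nat.iter (S n) W z)) in *.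
    set (c := Sm (Nat.iter 1 W z)) in *.
    nra.
Qed.

Lemma per_snd p z : (1 <= p)%nat -> in_R2plus z -> Nat.iter p W z = z -> snd z = 0.
Proof.
  intros Hp Hz Hper. destruct p as [|n]; [lia|].
  pose proof (mono n z Hz) as H. rewrite Hper in H.
  simpl in H. rewrite Sm_W in H.
  destruct Hz as [_ Hy].
  assert (0 < (beta - mu) * (beta - mu)).
  { assert (beta - mu <> 0) by lra. nra. }
  nra.
Qed.

Lemma iter_comm p z : Nat.iter p W (W z) = W (Nat.iter p W z).
Proof. induction p; simpl; auto. rewrite IHp; auto. Qed.

Lemma per_zero p z : (1 <= p)%nat -> in_R2plus z -> Nat.iter p W z = z -> z = (0, 0).
Proof.
  intros Hp Hz Hper.
  pose proof (per_snd p z Hp Hz Hper) as Hy.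
  assert (Hper' : Nat.iter p W (W z) = W z) by (rewrite iter_comm, Hper; auto).
  pose proof (per_snd p (W z) Hp (W_pos z Hz) Hper') as Hy'.
  destruct z as [x y]; simpl in Hy; subst y.
  unfold W, W0 in Hy'; simpl in Hy'. destruct Hz as [Hx _]; simpl in Hx.
  assert (Hq : alpha * x / (1 + x) = 0) by lra.
  unfold Rdiv in Hq.
  assert (0 < / (1 + x)) by (apply Rinv_0_lt_compat; lra).
  apply Rmult_integral in Hq as [Hq|Hq]; [|lra].
  apply Rmult_integral in Hq as [Hq|Hq]; [lra|]. subst; reflexivity.
Qed.

Lemma fixed0 : W (0, 0) = (0, 0).
Proof. unfold W, W0. f_equal; unfold Rdiv; ring_simplify; rewrite ?Rmult_0_l, ?Rmult_0_r; ring. Qed.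

End S.

Theorem theorem2 (alpha beta mu : R)
  (Ha : 0 < alpha <= 1) (Hb : 0 < beta) (Hm : 0 < mu <= 1) (Hbm : beta <> mu) :
  (forall (p : nat) (z : R * R), (2 <= p)%nat -> in_R2plus z ->
     ~ has_prime_period alpha beta mu p z) /\
  (forall (p : nat) (z : R * R), (1 <= p)%nat -> in_R2plus z ->
     W0_iter alpha beta mu p z = z -> W0 alpha beta mu z = z).
Proof.
  assert (H2 : forall (p : nat) (z : R * R), (1 <= p)%nat -> in_R2plus z ->
     W0_iter alpha beta mu p z = z -> W0 alpha beta mu z = z).
  { intros p z Hp Hz Hper. unfold W0_iter in Hper.
    pose proof (per_zero alpha beta mu Ha Hb Hm Hbm p z Hp Hz Hper) as E.
    subst z. apply fixed0. }
  split; [|exact H2].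
  intros p z Hp Hz [H1 [Hper Hk]].
  apply (Hk 1%nat); [lia|].
  unfold W0_iter; simpl. eapply H2; eauto.
Qed.
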